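(* Let $\phi(p_1,\dots,p_n)$ be a consistent formula of $\mathbf{PT}$ whose propositional variables are among $p_1,\dots,p_n$. The following are equivalent: (i) $\phi$ is flat; (ii) $\phi\equiv\Theta_X$ for some nonempty team $X$ on $\{p_1,\dots,p_n\}$; (iii) $\phi\equiv\neg\neg\phi$; (iv) $\models\phi\otimes\neg\phi$.
   Context: A valuation is a function $v$ from the set Prop of propositional variables to $\{0,1\}$; a team is a set of valuations. Formulas of $\mathbf{PT}$: $\phi::=p\mid\bot\mid\top\mid\,=\!(\phi_1,\dots,\phi_n,\phi)\mid\neg\phi\mid\phi\wedge\phi\mid\phi\otimes\phi\mid\phi\vee\phi\mid\phi\to\phi$. Satisfaction on a team $X$: $X\models p$ iff $v(p)=1$ for all $v\in X$; $X\models\bot$ iff $X=\emptyset$; $X\models\top$ always; $\wedge$ conjunction; $X\models\phi\otimes\psi$ iff $X=Y\cup Z$ with $Y\models\phi$, $Z\models\psi$; $X\models\phi\vee\psi$ iff $X\models\phi$ or $X\models\psi$; $X\models\phi\to\psi$ iff every $Y\subseteq X$ with $Y\models\phi$ satisfies $\psi$; $X\models\neg\phi$ iff $\{v\}\not\models\phi$ for all $v\in X$; $X\models\,=\!(\phi_1,\dots,\phi_n,\psi)$ iff $X\models\bigwedge_i(\phi_i\vee(\phi_i\to\bot))\to(\psi\vee(\psi\to\bot))$. $\models\phi$: all teams satisfy $\phi$; $\phi\equiv\psi$: same teams satisfy both; $\phi$ is consistent if some nonempty team satisfies $\phi$. $\phi$ is flat if for all teams $X$: $X\models\phi$ iff $\{v\}\models\phi$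 for all $v\in X$. A team on $V=\{p_1,\dots,p_n\}$ is a set of functions $V\to\{0,1\}$; a valuation $w$ satisfies formulas in variables from $V$ according to its restriction to $V$. For a nonempty team $X$ on $V$, $\Theta_X:=\neg\neg\bigvee_{v\in X}(p_1^{v(p_1)}\wedge\dots\wedge p_n^{v(p_n)})$, where $p^1:=p$, $p^0:=\neg p$. *)

(* Defs.v *)
From mathcomp Require Import all_boot.
Set Implicit Arguments. Unset Strict Implicit. Unset Printing Implicit Defensive.

(* Propositional variables are indexed by nat; p_(i+1) of the paper is [Var i]. *)
Definition valuation := nat -> bool.
(* A team is an arbitrary (possibly infinite) set of valuations. *)
Definition team := valuation -> Prop.

Definition subteam (Y X : team) : Prop := forall v, Y v -> X v.
Definition singleton (v : valuation) : team := fun w => w = v.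
Definition empty_team (X : team) : Prop := forall v, ~ X v.

Inductive form : Type :=
| Var of nat
| Bot
| Top
| Dep of list form & form
| Neg of form
| And of form & form
| Tensor of form & form
| Or of form & form              (* intuitionistic disjunction *)
| Imp of form & form.

(* Team semantics. The dependence atom is interpreted literally as
   /\_i (phi_i \/ (phi_i -> Bot)) -> (psi \/ (psi -> Bot)),
   with the empty conjunction being Top. *)
Fixpoint sat (f : form) (X : team) {struct f} : Prop :=
  match f with
  | Var p => forall v, X v -> v p = true
  | Bot => empty_team X
  | Top => True
  | Dep l g =>
      forall Y, subteam Y X ->
        (fix allsat (l : list form) : Prop :=
           match l with
           | nil => True
           | a :: l' =>
               (sat a Y \/ (forall Z, subteam Z Y -> sat a Z -> empty_team Z))
               /\ allsat l'
           end) l ->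
        (sat g Y \/ (forall Z, subteam Z Y -> sat g Z -> empty_team Z))
  | Neg g => forall v, X v -> ~ sat g (singleton v)
  | And g h => sat g X /\ sat h X
  | Tensor g h => exists Y Z : team,
      (forall v, X v <-> Y v \/ Z v) /\ sat g Y /\ sat h Z
  | Or g h => sat g X \/ sat h X
  | Imp g h => forall Y, subteam Y X -> sat g Y -> sat h Y
  end.

Definition valid (f : form) : Prop := forall X : team, sat f X.
Definition team_equiv (f g : form) : Prop := forall X : team, sat f X <-> sat g X.
Definition consistent (f : form) : Prop :=
  exists X : team, (exists v, X v) /\ sat f X.
Definition flat (f : form) : Prop :=
  forall X : team, sat f X <-> (forall v, X v -> sat f (singleton v)).

Fixpoint vars_lt (n : nat) (f : form) {struct f} : Prop :=
  match f with
  | Var p => (p < n)%N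
  | Bot | Top => True
  | Dep l g =>
      (fix allv (l : list form) : Prop :=
         match l with nil => True | a :: l' => vars_lt n a /\ allv l' end) l
      /\ vars_lt n g
  | Neg g => vars_lt n g
  | And g h | Tensor g h | Or g h | Imp g h => vars_lt n g /\ vars_lt n h
  end.

(* Big connectives over a list, with a default for the empty list
   (only used on nonempty lists for disjunction). *)
Fixpoint bigAnd (l : list form) : form :=
  match l with nil => Top | [:: a] => a | a :: l' => And a (bigAnd l') end.
Fixpoint bigOr (l : list form) : form :=
  match l with nil => Bot | [:: a] => a | a :: l' => Or a (bigOr l') end.

Definition lit (i : nat) (b : bool) : form := if b then Var i else Neg (Var i).

(* Teams on V = {p_1,...,p_n} are sets of functions 'I_n -> bool. *)
Definition Theta (n : nat) (X : {set {ffun 'I_n -> bool}}) : form :=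
  Neg (Neg (bigOr [seq bigAnd [seq lit (nat_of_ord i) (v i) | i : 'I_n <- enum 'I_n]
                | v : {ffun 'I_n -> bool} <- enum X])).

(* Main.v *)
Require Import Defs.
From mathcomp Require Import all_boot.
From Stdlib Require Import Classical ClassicalEpsilon FunctionalExtensionality PropExtensionality.

Set Implicit Arguments. Unset Strict Implicit. Unset Printing Implicit Defensive.

Definition allP (P : form -> Prop) := fix allP (l : list form) : Prop :=
  match l with nil => True | a :: l' => P a /\ allP l' end.

Definition form_ind2 (P : form -> Prop)
  (HV : forall p, P (Var p)) (HB : P Bot) (HT : P Top)
  (HD : forall l g, allP P l -> P g -> P (Dep l g))
  (HN : forall g, P g -> P (Neg g))
  (HA : forall g h, P g -> P h -> P (And g h))
  (HTe : forall g h, P g -> P h -> P (Tensor g h))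
  (HO : forall g h, P g -> P h -> P (Or g h))
  (HI : forall g h, P g -> P h -> P (Imp g h)) : forall f, P f :=
  fix F (f : form) : P f :=
  match f with
  | Var p => HV p
  | Bot => HB
  | Top => HT
  | Dep l g => HD l g ((fix go (l : list form) : allP P l :=
                        match l return allP P l with
                        | nil => I
                        | a :: l' => conj (F a) (go l') end) l) (F g)
  | Neg g => HN g (F g)
  | And g h => HA g h (F g) (F h)
  | Tensor g h => HTe g h (F g) (F h)
  | Or g h => HO g h (F g) (F h)
  | Imp g h => HI g h (F g) (F h)
  end.

Definition allsat (Y : team) := fix allsat (l : list form) : Prop :=
  match l with
  | nil => True
  | a :: l' => (sat a Y \/ (forall Z, subteam Z Y -> sat a Z -> empty_team Z)) /\ allsat l'
  end.

Definition allv n := fix allv (l : list form) : Prop :=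
  match l with nil => True | a :: l' => vars_lt n a /\ allv l' end.

Definition tb (v : valuation) (b : Prop) : team := fun u => u = v /\ b.

Lemma teamE (X Y : team) : (forall u, X u <-> Y u) -> X = Y.
Proof.
move=> H; apply: functional_extensionality => u; apply: propositional_extensionality; exact: H.
Qed.

Lemma sub_tb Y v b : subteam Y (tb v b) -> Y = tb v (Y v).
Proof.
move=> H; apply: teamE => u; split => [Yu|[-> //]].
by case: (H u Yu) => e _; subst.
Qed.

Lemma singleton_tb v : singleton v = tb v True.
Proof. by apply: teamE => u; split => [->|[]]. Qed.

Definition agree n (v w : valuation) := forall i, (i < n)%N -> v i = w i.

Lemma agree_sym n v w : agree n v w -> agree n w v.
Proof. by move=> H i Hi; rewrite H. Qed.

Definition Q n a := forall b v w, agree n v w -> sat a (tb v b) -> sat a (tb w b).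

Lemma D n a c v w : Q n a -> agree n v w ->
  (sat a (tb v c) \/ (forall Z, subteam Z (tb v c) -> sat a Z -> empty_team Z)) ->
  (sat a (tb w c) \/ (forall Z, subteam Z (tb w c) -> sat a Z -> empty_team Z)).
Proof.
move=> IH Hvw [H|H]; first by left; exact: IH Hvw H.
right => Z HZ HaZ; rewrite (sub_tb HZ) in HaZ.
have H2 := IH _ _ _ (agree_sym Hvw) HaZ.
have Hs : subteam (tb v (Z w)) (tb v c).
  by move=> u [-> Zw]; split => //; case: (HZ w Zw).
have Hemp := H (tb v (Z w)) Hs H2.
move=> u Zu; have := HZ u Zu; case=> e _; subst u.
by apply: (Hemp v); split.
Qed.

Lemma allsat_tr n l v w c : allP (fun a => vars_lt n a -> Q n a) l -> allv n l ->
  agree n w v -> allsat (tb w c) l -> allsat (tb v c) l.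
Proof.
elim: l => [|a l IH] //= [Ha IHl] [Hva Hvl] Hwv [Hd Hrest]; split.
  exact: D (Ha Hva) Hwv Hd.
exact: IH.
Qed.

Lemma loc n f : vars_lt n f -> Q n f.
Proof.
move: f; apply: (@form_ind2 (fun f => vars_lt n f -> Q n f)).
- move=> p /= Hp b v w Hvw H u [-> Hb]; rewrite -Hvw //; exact: H (conj erefl Hb).
- move=> _ b v w _ H u [_ Hb]; exact: H v (conj erefl Hb).
- done.
- move=> l g IHl IHg [Hl Hg] b v w Hvw H Y HY Hall.
  rewrite (sub_tb HY) in Hall *.
  have HY' : subteam (tb v (Y w)) (tb v b).
    by move=> u [-> Yw]; split => //; case: (HY w Yw).
  have Hall' : allsat (tb v (Y w)) l := allsat_tr IHl Hl (agree_sym Hvw) Hall.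
  have := H (tb v (Y w)) HY' Hall'.
  exact: D (IHg Hg) Hvw.
- move=> g IH Hg b v w Hvw H u [-> Hb] Hsat.
  apply: (H v (conj erefl Hb)); rewrite singleton_tb in Hsat; rewrite singleton_tb.
  exact: IH Hg True w v (agree_sym Hvw) Hsat.
- move=> g h IHg IHh [Hg Hh] b v w Hvw [H1 H2]; split; [exact: IHg Hg _ _ _ Hvw H1|exact: IHh Hh _ _ _ Hvw H2].
- move=> g h IHg IHh [Hg Hh] b v w Hvw [Y [Z [HU [HYs HZs]]]].
  have HYsub : subteam Y (tb v b) by move=> u Yu; apply/HU; left.
  have HZsub : subteam Z (tb v b) by move=> u Zu; apply/HU; right.
  rewrite (sub_tb HYsub) in HYs; rewrite (sub_tb HZsub) in HZs.
  exists (tb w (Y v)), (tb w (Z v)); split; last split.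
  + move=> u; split.
    * move=> [-> Hb]; case: (proj1 (HU v) (conj erefl Hb)) => ?; [left|right]; done.
    * case=> [[-> Yv]|[-> Zv]]; split => //.
        by case: ((HU v).2 (or_introl Yv)).
      by case: ((HU v).2 (or_intror Zv)).
  + exact: IHg Hg _ _ _ Hvw HYs.
  + exact: IHh Hh _ _ _ Hvw HZs.
- move=> g h IHg IHh [Hg Hh] b v w Hvw [H|H]; [left; exact: IHg Hg _ _ _ Hvw H|right; exact: IHh Hh _ _ _ Hvw H].
- move=> g h IHg IHh [Hg Hh] b v w Hvw H Y HY HgY.
  rewrite (sub_tb HY) in HgY *.
  apply: (IHh Hh _ v w Hvw); apply: H.
    by move=> u [-> Yw]; split => //; case: (HY w Yw).
  exact: IHg Hg _ w v (agree_sym Hvw) HgY.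
Qed.

Lemma loc1 n phi v w : vars_lt n phi -> agree n v w -> sat phi (singleton v) -> sat phi (singleton w).
Proof. rewrite !singleton_tb; move=> H; exact: loc H _ _ _. Qed.

Lemma down f X Y : subteam Y X -> sat f X -> sat f Y.
Proof.
elim: f X Y => [p|||l g IHg|g IHg|g IHg h IHh|g IHg h IHh|g IHg h IHh|g IHg h IHh] X Y HYX /=.
- move=> H v Yv; exact: H v (HYX v Yv).
- move=> H v Yv; exact: H v (HYX _ Yv).
- done.
- move=> H Z HZ; apply: H => u Zu; exact: HYX _ (HZ _ Zu).
- move=> H v Yv; exact: H v (HYX _ Yv).
- move=> [H1 H2]; split; [exact: IHg X Y HYX H1|exact: IHh X Y HYX H2].
- move=> [A [B [HU [HA HB]]]].
  exists (fun v => Y v /\ A v), (fun v => Y v /\ B v); split; last split.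
  + move=> v; split.
      by move=> Yv; case: (proj1 (HU v) (HYX v Yv)) => ?; [left|right].
    by case=> [][].
  + by apply: IHg HA => v [].
  + by apply: IHh HB => v [].
- by case=> H; [left; exact: IHg X Y HYX H|right; exact: IHh X Y HYX H].
- move=> H Z HZ; apply: H => u Zu; exact: HYX _ (HZ _ Zu).
Qed.

Lemma sat_NN f Y : sat (Neg (Neg f)) Y <-> forall u, Y u -> sat f (singleton u).
Proof.
split => /= [H u Yu|H v Yv Hn].
  apply: NNPP => Hn; apply: (H u Yu) => v0 ->; exact: Hn.
exact: Hn v erefl (H v Yv).
Qed.

Lemma sat_bigAnd (T : eqType) (F : T -> form) (s : seq T) X :
  sat (bigAnd [seq F i | i <- s]) X <-> forall i, i \in s -> sat (F i) X.
Proof.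
elim: s => [|a s IH]; first by split => // _ i; rewrite in_nil.
case: s IH => [|b s] IH /=.
  split => [H i|H]; last by apply: H; rewrite inE.
  by rewrite inE => /eqP ->.
split => [[Ha /IH Hs] i|H].
  by rewrite inE => /orP[/eqP->|/Hs].
split; first by apply: H; rewrite inE eqxx.
apply/IH => i Hi; apply: H; by rewrite inE Hi orbT.
Qed.

Lemma sat_bigOr (T : eqType) (F : T -> form) (s : seq T) X : (exists u, X u) ->
  (sat (bigOr [seq F i | i <- s]) X <-> exists i, i \in s /\ sat (F i) X).
Proof.
move=> [u Xu].
elim: s => [|a s IH].
  split => [H|[i []]]; last by rewrite in_nil.
  by case: (H u Xu).
case: s IH => [|b s] IH /=.
  split => [H|[i []]]; first by exists a; rewrite inE eqxx.
  by rewrite inE => /eqP ->.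
split => [[H|/IH [i [Hi H]]]|[i []]].
- by exists a; rewrite inE eqxx.
- by exists i; rewrite inE Hi orbT.
- rewrite inE => /orP[/eqP->|Hi H]; first by left.
  by right; apply/IH; exists i.
Qed.

Lemma sat_lit i b u : sat (lit i b) (singleton u) <-> u i = b.
Proof.
case: b => /=.
  by split => [H|H w ->]; [exact: H u erefl|].
split => [H|H v -> Hv].
  case E: (u i) => //; exfalso; apply: (H u erefl) => v0 ->; done.
by have := Hv u erefl; rewrite H.
Qed.

Definition restr n (v : valuation) : {ffun 'I_n -> bool} := [ffun i => v (val i)].

Lemma sat_ThetaBody n (X : {set {ffun 'I_n -> bool}}) u :
  sat (bigOr [seq bigAnd [seq lit (nat_of_ord i) (v i) | i : 'I_n <- enum 'I_n]
                | v : {ffun 'I_n -> bool} <- enum X]) (singleton u) <-> restr n u \in X.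
Proof.
rewrite (sat_bigOr (fun v : {ffun 'I_n -> bool} =>
   bigAnd [seq lit (nat_of_ord i) (v i) | i : 'I_n <- enum 'I_n])); last by exists u.
split.
  case=> f [Hf Hall].
  have Hall' := proj1 (sat_bigAnd (fun i : 'I_n => lit (nat_of_ord i) (f i)) _ _) Hall.
  have ->: restr n u = f.
    apply/ffunP => i; rewrite ffunE; apply/sat_lit; apply: Hall'; by rewrite mem_enum.
  by rewrite -mem_enum.
move=> H; exists (restr n u); split; first by rewrite mem_enum.
apply/(sat_bigAnd (fun i : 'I_n => lit (nat_of_ord i) (restr n u i))) => i _.
by apply/sat_lit; rewrite ffunE.
Qed.

Lemma sat_Theta n (X : {set {ffun 'I_n -> bool}}) Y :
  sat (Theta X) Y <-> forall u, Y u -> restr n u \in X.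
Proof.
rewrite /Theta; split => [/sat_NN H u Yu|H].
  by apply/sat_ThetaBody; apply: H.
by apply/sat_NN => u Yu; apply/sat_ThetaBody; apply: H.
Qed.

Definition ext n (f : {ffun 'I_n -> bool}) : valuation :=
  fun i => match (insub i : option 'I_n) with Some j => f j | None => false end.

Lemma agree_ext n v : agree n (ext (restr n v)) v.
Proof. by move=> i Hi; rewrite /ext insubT /= ffunE. Qed.

Definition dec (P : Prop) : bool := if excluded_middle_informative P then true else false.
Lemma decP P : dec P <-> P.
Proof. by rewrite /dec; case: excluded_middle_informative. Qed.

Theorem lemma4p1 (n : nat) (phi : form) :
  vars_lt n phi -> consistent phi ->
  [<-> flat phi;
       exists X : {set {ffun 'I_n -> bool}}, X != set0 /\ team_equiv phi (Theta X);
       team_equiv phi (Neg (Neg phi));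
       valid (Tensor phi (Neg phi))].
Proof.
move=> Hv Hc.
tfae => [H1|[X [HX Heq]]|H3|H4].
- exists [set f | dec (sat phi (singleton (ext f)))]; split.
    apply/set0Pn; case: Hc => Y [[v Yv] HY].
    exists (restr n v); rewrite inE; apply/decP.
    apply: (loc1 Hv (agree_sym (@agree_ext n v))).
    by apply: (down _ HY) => w ->.
  move=> Y; split => [HY|H].
    apply/sat_Theta => u Yu; rewrite inE; apply/decP.
    apply: (loc1 Hv (agree_sym (@agree_ext n u))).
    exact: (proj1 (H1 Y) HY) u Yu.
  apply/H1 => u Yu.
  have := proj1 (sat_Theta _ _) H u Yu; rewrite inE => /decP.
  exact: (loc1 Hv (@agree_ext n u)).
- move=> Y; split => H.
    apply/sat_NN => u Yu; apply/Heq; apply/sat_Theta => u' ->.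
    exact: (proj1 (sat_Theta _ _) (proj1 (Heq Y) H)) u Yu.
  apply/Heq; apply/sat_Theta => u Yu.
  have := proj1 (sat_NN _ _) H u Yu.
  move/Heq/sat_Theta; apply; done.
- move=> X.
  exists (fun v => X v /\ sat phi (singleton v)), (fun v => X v /\ ~ sat phi (singleton v)).
  split; last split.
  + move=> v; split => [Xv|[[]|[]]] //.
    by case: (classic (sat phi (singleton v))) => ?; [left|right].
  + by apply/H3; apply/sat_NN => u [].
  + by move=> u [_ Hn].
- move=> Y; split => [HY u Yu|H].
    by apply: (down _ HY) => w ->.
  case: (H4 Y) => [A [B [HU [HA HB]]]].
  apply: (down _ HA) => u Yu.
  case: (proj1 (HU u) Yu) => // Bu.
  by exfalso; exact: HB u Bu (H u Yu).
Qed.
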